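(* Let $\mathcal T$ be an essentially small triangulated category and $\mathscr M$ the class of good metrics on $\mathcal T$, with $\sim$ the equivalence of metrics. Then $\mathscr M/\!\sim$, ordered by $\le$, is a lattice. For good metrics $\mathcal A=\{A_n\}_{n}$ and $\mathcal C=\{C_n\}_n$, the meet is $[\mathcal A]\wedge[\mathcal C]=[\{A_n\cap C_n\}_{n}]$ and the join is $[\mathcal A]\vee[\mathcal C]=[\{\overline{A_n\cup C_n}\}_n]$ (both well defined, i.e. independent of the representatives).
   Context: A good metric is a chain $B_1\supseteq B_2\supseteq\cdots$ of full subcategories of $\mathcal T$ each containing $0$, closed under extensions, with $\Sigma^{-1}B_{n+1}\cup B_{n+1}\cup\Sigma B_{n+1}\subseteq B_n$. $\{A_n\}\le\{C_n\}$ if for every $n$ there is $m$ with $A_m\subseteq C_n$; $\mathcal A\sim\mathcal C$ if $\mathcal A\le\mathcal C$ and $\mathcal C\le\mathcal A$. For a class $\mathcal X$, $\overline{\mathcal X}$ is the smallest full subcategory containing $\mathcal X$ and $0$ closed under extensions. *)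

(* Defs.v *)
From HB Require Import structures.
From mathcomp Require Import all_boot all_algebra.
Set Implicit Arguments. Unset Strict Implicit. Unset Printing Implicit Defensive.
Import GRing.Theory.
Local Open Scope ring_scope.

Record precat := PreCat {
  Obj :> Type;
  Hom : Obj -> Obj -> zmodType;
  comp : forall X Y Z : Obj, Hom Y Z -> Hom X Y -> Hom X Z;  (* comp g f = g o f *)
  idm : forall X : Obj, Hom X X
}.
Arguments Hom {p}.
Arguments comp {p X Y Z}.
Arguments idm {p}.

Definition is_iso (C : precat) (X Y : C) (f : Hom X Y) : Prop :=
  exists g : Hom Y X, comp g f = idm X /\ comp f g = idm Y.

Definition is_additive (C : precat) (z : C) : Prop :=
  (forall (X Y Z W : C) (h : Hom Z W) (g : Hom Y Z) (f : Hom X Y),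
      comp h (comp g f) = comp (comp h g) f) /\
  (forall (X Y : C) (f : Hom X Y), comp (idm Y) f = f) /\
  (forall (X Y : C) (f : Hom X Y), comp f (idm X) = f) /\
  (forall (X Y Z : C) (g1 g2 : Hom Y Z) (f : Hom X Y),
      comp (g1 + g2) f = comp g1 f + comp g2 f) /\
  (forall (X Y Z : C) (g : Hom Y Z) (f1 f2 : Hom X Y),
      comp g (f1 + f2) = comp g f1 + comp g f2) /\
  (forall (X : C) (f : Hom z X), f = 0) /\
  (forall (X : C) (f : Hom X z), f = 0) /\
  (forall X Y : C, exists (P : C) (i1 : Hom X P) (i2 : Hom Y P)
                          (p1 : Hom P X) (p2 : Hom P Y),
      [/\ comp p1 i1 = idm X, comp p2 i2 = idm Y, comp p1 i2 = 0,
          comp p2 i1 = 0 & comp i1 p1 + comp i2 p2 = idm P]).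

Record triang_data (C : precat) := TriangData {
  zero_obj : C;
  Sig : C -> C;
  Sigm : forall X Y : C, Hom X Y -> Hom (Sig X) (Sig Y);
  dist : forall X Y Z : C, Hom X Y -> Hom Y Z -> Hom Z (Sig X) -> Prop
}.
Arguments zero_obj {C}.
Arguments Sig {C}.
Arguments Sigm {C} t {X Y}.
Arguments dist {C} t {X Y Z}.

Definition is_triangulated (C : precat) (T : triang_data C) : Prop :=
  is_additive (zero_obj T) /\
  (forall X : C, Sigm T (idm X) = idm (Sig T X)) /\
  (forall (X Y Z : C) (g : Hom Y Z) (f : Hom X Y),
      Sigm T (comp g f) = comp (Sigm T g) (Sigm T f)) /\
  (forall (X Y : C) (f g : Hom X Y), Sigm T (f + g) = Sigm T f + Sigm T g) /\
  (forall (X Y : C) (g : Hom (Sig T X) (Sig T Y)), exists f : Hom X Y, Sigm T f = g) /\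
  (forall (X Y : C) (f g : Hom X Y), Sigm T f = Sigm T g -> f = g) /\
  (forall Y : C, exists (X : C) (f : Hom (Sig T X) Y), is_iso f) /\
  (forall (X Y Z X' Y' Z' : C) (u : Hom X Y) (v : Hom Y Z) (w : Hom Z (Sig T X))
          (u' : Hom X' Y') (v' : Hom Y' Z') (w' : Hom Z' (Sig T X'))
          (a : Hom X X') (b : Hom Y Y') (c : Hom Z Z'),
      is_iso a -> is_iso b -> is_iso c ->
      comp u' a = comp b u -> comp v' b = comp c v -> comp w' c = comp (Sigm T a) w ->
      dist T u v w -> dist T u' v' w') /\
  (forall X : C, dist T (idm X) (0 : Hom X (zero_obj T)) (0 : Hom (zero_obj T) (Sig T X))) /\
  (forall (X Y : C) (u : Hom X Y), exists (Z : C) (v : Hom Y Z) (w : Hom Z (Sig T X)),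
      dist T u v w) /\
  (forall (X Y Z : C) (u : Hom X Y) (v : Hom Y Z) (w : Hom Z (Sig T X)),
      dist T u v w <-> dist T v w (- Sigm T u)) /\
  (forall (X Y Z X' Y' Z' : C) (u : Hom X Y) (v : Hom Y Z) (w : Hom Z (Sig T X))
          (u' : Hom X' Y') (v' : Hom Y' Z') (w' : Hom Z' (Sig T X'))
          (a : Hom X X') (b : Hom Y Y'),
      dist T u v w -> dist T u' v' w' -> comp u' a = comp b u ->
      exists c : Hom Z Z', comp v' b = comp c v /\ comp w' c = comp (Sigm T a) w) /\
  (forall (X Y Z Z' X' Y' : C) (u : Hom X Y) (v : Hom Y Z)
          (j : Hom Y Z') (k : Hom Z' (Sig T X))
          (l : Hom Z X') (i : Hom X' (Sig T Y))
          (m : Hom Z Y') (n : Hom Y' (Sig T X)),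
      dist T u j k -> dist T v l i -> dist T (comp v u) m n ->
      exists (f : Hom Z' Y') (g : Hom Y' X'),
        [/\ dist T f g (comp (Sigm T j) i),
            comp f j = comp m v, comp n f = k,
            comp g m = l & comp i g = comp (Sigm T u) n]).

Section Metrics.
Variables (C : precat) (T : triang_data C).

(** A full subcategory is given by a predicate on objects. *)
Definition contains0 (B : C -> Prop) : Prop := B (zero_obj T).

Definition ext_closed (B : C -> Prop) : Prop :=
  forall (X Y Z : C) (u : Hom X Y) (v : Hom Y Z) (w : Hom Z (Sig T X)),
    dist T u v w -> B X -> B Z -> B Y.

Definition good_metric (B : nat -> C -> Prop) : Prop :=
  forall n : nat,
    [/\ contains0 (B n), ext_closed (B n),
        (forall X, B n.+1 X -> B n X),
        (forall X, B n.+1 X -> B n (Sig T X)) &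
        (forall X, B n.+1 (Sig T X) -> B n X)].

Definition metric_le (A E : nat -> C -> Prop) : Prop :=
  forall n : nat, exists m : nat, forall X, A m X -> E n X.

Definition metric_equiv (A E : nat -> C -> Prop) : Prop :=
  metric_le A E /\ metric_le E A.

Definition ext_closure (S : C -> Prop) : C -> Prop :=
  fun Y => forall B : C -> Prop,
    contains0 B -> ext_closed B -> (forall Z, S Z -> B Z) -> B Y.

Definition metric_meet (A E : nat -> C -> Prop) : nat -> C -> Prop :=
  fun n X => A n X /\ E n X.

Definition metric_join (A E : nat -> C -> Prop) : nat -> C -> Prop :=
  fun n => ext_closure (fun X => A n X \/ E n X).

End Metrics.

(* Main.v *)
Require Import Defs.
From mathcomp Require Import all_boot all_algebra.
Import Defs.
Set Implicit Arguments. Unset Strict Implicit. Unset Printing Implicit Defensive.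
Import GRing.Theory.
Local Open Scope ring_scope.

Lemma L_assoc (C : precat) (T : triang_data C) (HT : is_triangulated T)
  (X Y Z W : C) (h : Hom Z W) (g : Hom Y Z) (f : Hom X Y) :
  comp h (comp g f) = comp (comp h g) f.
Proof. by case: HT => [[H _] _]. Qed.
Lemma L_idl (C : precat) (T : triang_data C) (HT : is_triangulated T)
  (X Y : C) (f : Hom X Y) : comp (idm Y) f = f.
Proof. by case: HT => [[_ [H _]] _]. Qed.
Lemma L_idr (C : precat) (T : triang_data C) (HT : is_triangulated T)
  (X Y : C) (f : Hom X Y) : comp f (idm X) = f.
Proof. by case: HT => [[_ [_ [H _]]] _]. Qed.
Lemma L_addl (C : precat) (T : triang_data C) (HT : is_triangulated T)
  (X Y Z : C) (g1 g2 : Hom Y Z) (f : Hom X Y) :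
      comp (g1 + g2) f = comp g1 f + comp g2 f.
Proof. by case: HT => [[_ [_ [_ [H _]]]] _]. Qed.
Lemma L_addr (C : precat) (T : triang_data C) (HT : is_triangulated T)
  (X Y Z : C) (g : Hom Y Z) (f1 f2 : Hom X Y) :
      comp g (f1 + f2) = comp g f1 + comp g f2.
Proof. by case: HT => [[_ [_ [_ [_ [H _]]]]] _]. Qed.
Lemma L_z1 (C : precat) (T : triang_data C) (HT : is_triangulated T)
  (X : C) (f : Hom (zero_obj T) X) : f = 0.
Proof. by case: HT => [[_ [_ [_ [_ [_ [H _]]]]]] _]. Qed.
Lemma L_z2 (C : precat) (T : triang_data C) (HT : is_triangulated T)
  (X : C) (f : Hom X (zero_obj T)) : f = 0.
Proof. by case: HT => [[_ [_ [_ [_ [_ [_ [H _]]]]]]] _]. Qed.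
Lemma S_id (C : precat) (T : triang_data C) (HT : is_triangulated T)
  (X : C) : Sigm T (idm X) = idm (Sig T X).
Proof. by case: HT => [_ [H _]]. Qed.
Lemma S_comp (C : precat) (T : triang_data C) (HT : is_triangulated T)
  (X Y Z : C) (g : Hom Y Z) (f : Hom X Y) :
      Sigm T (comp g f) = comp (Sigm T g) (Sigm T f).
Proof. by case: HT => [_ [_ [H _]]]. Qed.
Lemma S_add (C : precat) (T : triang_data C) (HT : is_triangulated T)
  (X Y : C) (f g : Hom X Y) : Sigm T (f + g) = Sigm T f + Sigm T g.
Proof. by case: HT => [_ [_ [_ [H _]]]]. Qed.
Lemma S_full (C : precat) (T : triang_data C) (HT : is_triangulated T)
  (X Y : C) (g : Hom (Sig T X) (Sig T Y)) : exists f : Hom X Y, Sigm T f = g.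
Proof. by case: HT => [_ [_ [_ [_ [H _]]]]]. Qed.
Lemma S_faith (C : precat) (T : triang_data C) (HT : is_triangulated T)
  (X Y : C) (f g : Hom X Y) : Sigm T f = Sigm T g -> f = g.
Proof. by case: HT => [_ [_ [_ [_ [_ [H _]]]]]] => /H. Qed.
Lemma S_ess (C : precat) (T : triang_data C) (HT : is_triangulated T)
  (Y : C) : exists (X : C) (f : Hom (Sig T X) Y), is_iso f.
Proof. by case: HT => [_ [_ [_ [_ [_ [_ [H _]]]]]]]. Qed.
Lemma T_id (C : precat) (T : triang_data C) (HT : is_triangulated T)
  (X : C) : dist T (idm X) (0 : Hom X (zero_obj T)) (0 : Hom (zero_obj T) (Sig T X)).
Proof. by case: HT => [_ [_ [_ [_ [_ [_ [_ [_ [H _]]]]]]]]]. Qed.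
Lemma T_iso (C : precat) (T : triang_data C) (HT : is_triangulated T)
  (X Y Z X' Y' Z' : C) (u : Hom X Y) (v : Hom Y Z) (w : Hom Z (Sig T X))
          (u' : Hom X' Y') (v' : Hom Y' Z') (w' : Hom Z' (Sig T X'))
          (a : Hom X X') (b : Hom Y Y') (c : Hom Z Z') :
      is_iso a -> is_iso b -> is_iso c ->
      comp u' a = comp b u -> comp v' b = comp c v -> comp w' c = comp (Sigm T a) w ->
      dist T u v w -> dist T u' v' w'.
Proof. by case: HT => [_ [_ [_ [_ [_ [_ [_ [H _]]]]]]]]; apply: H. Qed.
Lemma T_ex (C : precat) (T : triang_data C) (HT : is_triangulated T)
  (X Y : C) (u : Hom X Y) : exists (Z : C) (v : Hom Y Z) (w : Hom Z (Sig T X)),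
      dist T u v w.
Proof. by case: HT => [_ [_ [_ [_ [_ [_ [_ [_ [_ [H _]]]]]]]]]]. Qed.
Lemma T_rot (C : precat) (T : triang_data C) (HT : is_triangulated T)
  (X Y Z : C) (u : Hom X Y) (v : Hom Y Z) (w : Hom Z (Sig T X)) :
      dist T u v w -> dist T v w (- Sigm T u).
Proof. by case: HT => [_ [_ [_ [_ [_ [_ [_ [_ [_ [_ [H _]]]]]]]]]]] => /H. Qed.
Lemma T_mor (C : precat) (T : triang_data C) (HT : is_triangulated T)
  (X Y Z X' Y' Z' : C) (u : Hom X Y) (v : Hom Y Z) (w : Hom Z (Sig T X))
          (u' : Hom X' Y') (v' : Hom Y' Z') (w' : Hom Z' (Sig T X'))
          (a : Hom X X') (b : Hom Y Y') :
      dist T u v w -> dist T u' v' w' -> comp u' a = comp b u ->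
      exists c : Hom Z Z', comp v' b = comp c v /\ comp w' c = comp (Sigm T a) w.
Proof. by case: HT => [_ [_ [_ [_ [_ [_ [_ [_ [_ [_ [_ [H _]]]]]]]]]]]]; apply: H. Qed.

Lemma comp0r (C : precat) (T : triang_data C) (HT : is_triangulated T)
  (X Y Z : C) (g : Hom Y Z) : comp g (0 : Hom X Y) = 0.
Proof.
have h := L_addr HT g (0 : Hom X Y) 0; rewrite addr0 in h.
have: comp g (0 : Hom X Y) + comp g 0 - comp g 0 = comp g 0 - comp g 0 by rewrite -h.
by rewrite addrK subrr.
Qed.
Lemma comp0l (C : precat) (T : triang_data C) (HT : is_triangulated T)
  (X Y Z : C) (f : Hom X Y) : comp (0 : Hom Y Z) f = 0.
Proof.
have h := L_addl HT (0 : Hom Y Z) 0 f; rewrite addr0 in h.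
have: comp (0 : Hom Y Z) f + comp 0 f - comp 0 f = comp 0 f - comp 0 f by rewrite -h.
by rewrite addrK subrr.
Qed.
Lemma compNr (C : precat) (T : triang_data C) (HT : is_triangulated T)
  (X Y Z : C) (g : Hom Y Z) (f : Hom X Y) : comp g (- f) = - comp g f.
Proof.
have h := L_addr HT g f (-f); rewrite subrr (comp0r HT) in h.
by apply/eqP; rewrite -addr_eq0 addrC -h.
Qed.
Lemma compNl (C : precat) (T : triang_data C) (HT : is_triangulated T)
  (X Y Z : C) (g : Hom Y Z) (f : Hom X Y) : comp (- g) f = - comp g f.
Proof.
have h := L_addl HT g (-g) f; rewrite subrr (comp0l HT) in h.
by apply/eqP; rewrite -addr_eq0 addrC -h.
Qed.
Lemma compBr (C : precat) (T : triang_data C) (HT : is_triangulated T)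
  (X Y Z : C) (g : Hom Y Z) (f1 f2 : Hom X Y) : comp g (f1 - f2) = comp g f1 - comp g f2.
Proof. by rewrite (L_addr HT) (compNr HT). Qed.
Lemma S0 (C : precat) (T : triang_data C) (HT : is_triangulated T)
  (X Y : C) : Sigm T (0 : Hom X Y) = 0.
Proof.
have h := S_add HT (0 : Hom X Y) 0; rewrite addr0 in h.
have: Sigm T (0 : Hom X Y) + Sigm T 0 - Sigm T 0 = Sigm T 0 - Sigm T 0 by rewrite -h.
by rewrite addrK subrr.
Qed.
Lemma SN (C : precat) (T : triang_data C) (HT : is_triangulated T)
  (X Y : C) (f : Hom X Y) : Sigm T (- f) = - Sigm T f.
Proof.
have h := S_add HT f (-f); rewrite subrr (S0 HT) in h.
by apply/eqP; rewrite -addr_eq0 addrC -h.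
Qed.

Lemma iso_id (C : precat) (T : triang_data C) (HT : is_triangulated T)
  (X : C) : is_iso (idm X).
Proof. by exists (idm X); rewrite (L_idl HT). Qed.
Lemma iso_sym (C : precat) (X Y : C) (f : Hom X Y) :
  is_iso f -> exists g : Hom Y X, is_iso g /\ comp g f = idm X /\ comp f g = idm Y.
Proof. by case=> g [h1 h2]; exists g; split => //; exists f. Qed.
Lemma iso_S (C : precat) (T : triang_data C) (HT : is_triangulated T)
  (X Y : C) (f : Hom X Y) : is_iso f -> is_iso (Sigm T f).
Proof.
case=> g [h1 h2]; exists (Sigm T g).
by rewrite -!(S_comp HT) h1 h2 !(S_id HT).
Qed.
Lemma iso_N (C : precat) (T : triang_data C) (HT : is_triangulated T)
  (X Y : C) (f : Hom X Y) : is_iso f -> is_iso (- f).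
Proof.
case=> g [h1 h2]; exists (- g).
by rewrite (compNl HT) (compNr HT) opprK (compNl HT) (compNr HT) opprK.
Qed.

Lemma dist_comp0 (C : precat) (T : triang_data C) (HT : is_triangulated T)
  (X Y Z : C) (u : Hom X Y) (v : Hom Y Z) (w : Hom Z (Sig T X)) :
  dist T u v w -> comp v u = 0.
Proof.
move=> D.
have [c [Hc _]] := T_mor HT (T_id HT X) D (a := idm X) (b := u) erefl.
by rewrite Hc (comp0r HT).
Qed.

Lemma exact_mid (C : precat) (T : triang_data C) (HT : is_triangulated T)
  (X Y Z W : C) (u : Hom X Y) (v : Hom Y Z) (w : Hom Z (Sig T X)) (g : Hom W Y) :
  dist T u v w -> comp v g = 0 -> exists h : Hom W X, comp u h = g.
Proof.
move=> D vg.
have D1 := T_rot HT (T_id HT W).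
have D' := T_rot HT D.
have [c [_ Hc]] := T_mor HT D1 D' (a := g) (b := 0) (ltac:(by rewrite vg (comp0l HT))).
rewrite (compNl HT) (compNr HT) (S_id HT) (L_idr HT) in Hc.
move/oppr_inj: Hc => Hc.
have [h Hh] := S_full HT c.
exists h; apply: (S_faith HT).
by rewrite (S_comp HT) Hh.
Qed.

Lemma five (C : precat) (T : triang_data C) (HT : is_triangulated T)
  (X Y Z X' Y' Z' : C) (u : Hom X Y) (v : Hom Y Z) (w : Hom Z (Sig T X))
  (u' : Hom X' Y') (v' : Hom Y' Z') (w' : Hom Z' (Sig T X'))
  (a : Hom X X') (b : Hom Y Y') (c : Hom Z Z') :
  dist T u v w -> dist T u' v' w' -> is_iso a -> is_iso b ->
  comp u' a = comp b u -> comp v' b = comp c v -> comp w' c = comp (Sigm T a) w ->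
  is_iso c.
Proof.
move=> D D' [ai [a1 a2]] [bi [b1 b2]] Hu Hv Hw.
have Sa1 : comp (Sigm T ai) (Sigm T a) = idm _ by rewrite -(S_comp HT) a1 (S_id HT).
have Sa2 : comp (Sigm T a) (Sigm T ai) = idm _ by rewrite -(S_comp HT) a2 (S_id HT).
have Sb1 : comp (Sigm T bi) (Sigm T b) = idm _ by rewrite -(S_comp HT) b1 (S_id HT).
have mono : forall W (z : Hom W Z), comp c z = 0 -> z = 0.
  move=> W z cz.
  have wz : comp w z = 0.
    have : comp (Sigm T ai) (comp (Sigm T a) (comp w z)) = 0.
      by rewrite (L_assoc HT (Sigm T a)) -Hw -(L_assoc HT) cz !(comp0r HT).
    by rewrite (L_assoc HT) Sa1 (L_idl HT).
  have [y Hy] := exact_mid HT (T_rot HT D) wz.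
  have [x' Hx'] : exists x' : Hom W X', comp u' x' = comp b y.
    apply: (exact_mid HT D').
    by rewrite (L_assoc HT) Hv -(L_assoc HT) Hy cz.
  have Hy2 : y = comp u (comp ai x').
    have : comp bi (comp b y) = comp bi (comp b (comp u (comp ai x'))).
      by rewrite (L_assoc HT b u) -Hu -(L_assoc HT) (L_assoc HT a) a2 (L_idl HT) Hx'.
    by rewrite !(L_assoc HT bi) b1 !(L_idl HT).
  by rewrite -Hy Hy2 (L_assoc HT) (dist_comp0 HT D) (comp0l HT).
have epi : forall W (z' : Hom W Z'), exists s, comp c s = z'.
  move=> W z'.
  pose t := comp (Sigm T ai) (comp w' z').
  have ut : comp (- Sigm T u) t = 0.
    rewrite (compNl HT); apply/eqP; rewrite oppr_eq0; apply/eqP.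
    have Su : comp (Sigm T b) (Sigm T u) = comp (Sigm T u') (Sigm T a)
      by rewrite -!(S_comp HT) Hu.
    have : comp (Sigm T bi) (comp (Sigm T b) (comp (Sigm T u) t)) = 0.
      rewrite (L_assoc HT (Sigm T b)) Su -(L_assoc HT) /t (L_assoc HT (Sigm T a)) Sa2.
      rewrite (L_idl HT) (L_assoc HT (Sigm T u')).
      have D2 := dist_comp0 HT (T_rot HT (T_rot HT D')).
      rewrite (compNl HT) in D2. move/eqP: D2; rewrite oppr_eq0 => /eqP ->.
      by rewrite (comp0l HT) (comp0r HT).
    by rewrite (L_assoc HT) Sb1 (L_idl HT).
  have [s Hs] := exact_mid HT (T_rot HT (T_rot HT D)) ut.
  have e0 : comp w' (z' - comp c s) = 0.
    rewrite (compBr HT) (L_assoc HT w') Hw -(L_assoc HT) Hs /t (L_assoc HT (Sigm T a)).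
    by rewrite Sa2 (L_idl HT) subrr.
  have [y' Hy'] := exact_mid HT (T_rot HT D') e0.
  exists (s + comp v (comp bi y')).
  rewrite (L_addr HT) (L_assoc HT c) -Hv -(L_assoc HT) (L_assoc HT b) b2 (L_idl HT) Hy'.
  by rewrite addrCA subrr addr0.
have [s Hs] := epi _ (idm Z').
exists s; split => //.
apply/eqP; rewrite -subr_eq0; apply/eqP; apply: mono.
by rewrite (compBr HT) (L_assoc HT) Hs (L_idl HT) (L_idr HT) subrr.
Qed.

Lemma rot3 (C : precat) (T : triang_data C) (HT : is_triangulated T)
  (X Y Z : C) (u : Hom X Y) (v : Hom Y Z) (w : Hom Z (Sig T X)) :
  dist T u v w -> dist T (- Sigm T u) (- Sigm T v) (- Sigm T w).
Proof. by move=> D; do 3 apply: (T_rot HT). Qed.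

Lemma iso_closed (C : precat) (T : triang_data C) (HT : is_triangulated T)
  (P : C -> Prop) (X Y : C) (f : Hom X Y) :
  contains0 T P -> ext_closed T P -> is_iso f -> P X -> P Y.
Proof.
move=> P0 Pe isf PX.
have D : dist T f (0 : Hom Y (zero_obj T)) (0 : Hom (zero_obj T) (Sig T X)).
  apply: (T_iso HT (iso_id HT X) isf (iso_id HT (zero_obj T)) _ _ _ (T_id HT X)).
  - by [].
  - by rewrite (comp0l HT) (comp0r HT).
  - by rewrite (comp0l HT) (comp0r HT).
exact: (Pe _ _ _ _ _ _ D PX P0).
Qed.

Lemma cl_0 (C : precat) (T : triang_data C) (S : C -> Prop) :
  contains0 T (ext_closure T S).
Proof. by move=> B B0. Qed.
Lemma cl_ext (C : precat) (T : triang_data C) (S : C -> Prop) :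
  ext_closed T (ext_closure T S).
Proof.
move=> X Y Z u v w D HX HZ B B0 Be BS.
exact: (Be _ _ _ _ _ _ D (HX B B0 Be BS) (HZ B B0 Be BS)).
Qed.
Lemma cl_S (C : precat) (T : triang_data C) (S : C -> Prop) (X : C) :
  S X -> ext_closure T S X.
Proof. by move=> h B _ _ BS; apply: BS. Qed.
Lemma cl_min (C : precat) (T : triang_data C) (S B : C -> Prop) :
  contains0 T B -> ext_closed T B -> (forall Z, S Z -> B Z) ->
  forall X, ext_closure T S X -> B X.
Proof. by move=> B0 Be BS X h; apply: h. Qed.

Lemma gm_mono (C : precat) (T : triang_data C) (A : nat -> C -> Prop) (m n : nat) (X : C) :
  good_metric T A -> (m <= n)%N -> A n X -> A m X.
Proof.
move=> hA le; rewrite -(subnKC le); elim: (n - m)%N => [|k IH]; first by rewrite addn0.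
by rewrite addnS => h; apply: IH; have [_ _ H _ _] := hA (m + k)%N; apply: H.
Qed.

Lemma meet_good (C : precat) (T : triang_data C) (A E : nat -> C -> Prop) :
  good_metric T A -> good_metric T E -> good_metric T (metric_meet A E).
Proof.
move=> hA hE n.
have [A0 Ae Ad AS ASi] := hA n; have [E0 Ee Ed ES ESi] := hE n.
split.
- by split.
- move=> X Y Z u v w D [h1 h2] [h3 h4]; split; [exact: (Ae _ _ _ _ _ _ D) | exact: (Ee _ _ _ _ _ _ D)].
- by move=> X [h1 h2]; split; [apply: Ad | apply: Ed].
- by move=> X [h1 h2]; split; [apply: AS | apply: ES].
- by move=> X [h1 h2]; split; [apply: ASi | apply: ESi].
Qed.

Lemma join_good (C : precat) (T : triang_data C) (HT : is_triangulated T)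
  (A E : nat -> C -> Prop) :
  good_metric T A -> good_metric T E -> good_metric T (metric_join T A E).
Proof.
move=> hA hE n.
have [A0 Ae Ad AS ASi] := hA n; have [E0 Ee Ed ES ESi] := hE n.
have [A0' Ae' _ _ _] := hA n.+1; have [E0' Ee' _ _ _] := hE n.+1.
rewrite /metric_join.
set K := ext_closure T (fun X => A n X \/ E n X).
have K0 : contains0 T K := @cl_0 _ _ _.
have Ke : ext_closed T K := @cl_ext _ _ _.
split.
- exact: cl_0.
- exact: cl_ext.
- apply: cl_min => //. by move=> Z [h|h]; apply: cl_S; [left; apply: Ad | right; apply: Ed].
- apply: (cl_min (B := fun Y => K (Sig T Y))).
  + by apply: cl_S; left; apply: AS.
  + move=> X Y Z u v w D HX HZ; exact: (Ke _ _ _ _ _ _ (rot3 HT D) HX HZ).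
  + by move=> Z [h|h]; apply: cl_S; [left; apply: AS | right; apply: ES].
- move=> X HX.
  suff: forall Y, ext_closure T (fun X => A n.+1 X \/ E n.+1 X) Y ->
     forall Y' (f : Hom (Sig T Y') Y), is_iso f -> K Y'.
    by move=> H; apply: (H _ HX X (idm _)); apply: (iso_id HT).
  apply: cl_min.
  + move=> Y' f isf.
    have idz : idm Y' = 0.
      apply: (S_faith HT); rewrite (S_id HT) (S0 HT).
      case: isf => g [g1 _]; by rewrite -g1 (L_z2 HT f) (comp0r HT).
    have iz : is_iso (0 : Hom (zero_obj T) Y').
      exists 0; rewrite (comp0l HT) (comp0l HT); split; [exact: esym (L_z1 HT _) | by rewrite idz].
    exact: (iso_closed HT K0 Ke iz K0).
  + move=> X0 Y Z u v w D BX BZ Y' f isof.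
    have [X' [a isoa]] := S_ess HT X0.
    have [fi [_ [_ f2]]] := iso_sym isof.
    have [u0 Hu0] := S_full HT (comp fi (comp u a)).
    have [W [v0 [w0 D0]]] := T_ex HT u0.
    have D3 := rot3 HT D0.
    have H : comp u a = comp (- f) (- Sigm T u0).
      by rewrite (compNl HT) (compNr HT) opprK Hu0 (L_assoc HT) f2 (L_idl HT).
    have [c [Hc1 Hc2]] := T_mor HT D3 D H.
    have isoc := five HT D3 D isoa (iso_N HT isof) H Hc1 Hc2.
    exact: (Ke _ _ _ _ _ _ D0 (BX X' a isoa) (BZ W c isoc)).
  + move=> Z hZ Y' f isof.
    have [fi [isfi _]] := iso_sym isof.
    apply: cl_S; case: hZ => h; [left; apply: ASi | right; apply: ESi].
    * exact: (iso_closed HT A0' Ae' isfi h).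
    * exact: (iso_closed HT E0' Ee' isfi h).
Qed.

Lemma meet_le (C : precat) (T : triang_data C) (A A' E E' : nat -> C -> Prop) :
  good_metric T A -> good_metric T E -> metric_le A A' -> metric_le E E' ->
  metric_le (metric_meet A E) (metric_meet A' E').
Proof.
move=> hA hE h1 h2 n.
have [m1 k1] := h1 n; have [m2 k2] := h2 n.
exists (maxn m1 m2) => X [hX1 hX2]; split.
- by apply: k1; apply: (gm_mono hA (leq_maxl m1 m2) hX1).
- by apply: k2; apply: (gm_mono hE (leq_maxr m1 m2) hX2).
Qed.

Lemma join_le (C : precat) (T : triang_data C) (A A' E E' : nat -> C -> Prop) :
  good_metric T A -> good_metric T E -> metric_le A A' -> metric_le E E' ->
  metric_le (metric_join T A E) (metric_join T A' E').
Proof.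
move=> hA hE h1 h2 n.
have [m1 k1] := h1 n; have [m2 k2] := h2 n.
exists (maxn m1 m2); apply: cl_min; [exact: (@cl_0 _ _ _) | exact: (@cl_ext _ _ _) |].
move=> Z [h|h]; apply: cl_S.
- by left; apply: k1; apply: (gm_mono hA (leq_maxl m1 m2) h).
- by right; apply: k2; apply: (gm_mono hE (leq_maxr m1 m2) h).
Qed.

Theorem proposition5p2 (C : precat) (T : triang_data C) (HT : is_triangulated T) :
  (* ≤ is a preorder on good metrics (so ∼-classes are partially ordered) *)
  (forall A, good_metric T A -> metric_le A A) /\
  (forall A B E, good_metric T A -> good_metric T B -> good_metric T E ->
     metric_le A B -> metric_le B E -> metric_le A E) /\
  (* the meet *)
  (forall A E, good_metric T A -> good_metric T E ->
     [/\ good_metric T (metric_meet A E),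
         metric_le (metric_meet A E) A, metric_le (metric_meet A E) E &
         forall D, good_metric T D -> metric_le D A -> metric_le D E ->
           metric_le D (metric_meet A E)]) /\
  (* the join *)
  (forall A E, good_metric T A -> good_metric T E ->
     [/\ good_metric T (metric_join T A E),
         metric_le A (metric_join T A E), metric_le E (metric_join T A E) &
         forall D, good_metric T D -> metric_le A D -> metric_le E D ->
           metric_le (metric_join T A E) D]) /\
  (* well-definedness on equivalence classes *)
  (forall A A' E E', good_metric T A -> good_metric T A' ->
     good_metric T E -> good_metric T E' ->
     metric_equiv A A' -> metric_equiv E E' ->
     metric_equiv (metric_meet A E) (metric_meet A' E') /\
     metric_equiv (metric_join T A E) (metric_join T A' E')).
Proof.
split; [|split; [|split; [|split]]].
- by move=> A _ n; exists n.
- move=> A B E _ _ _ hAB hBE n.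
  have [m hm] := hBE n; have [k hk] := hAB m.
  by exists k => X /hk/hm.
- move=> A E hA hE; split.
  + exact: meet_good.
  + by move=> n; exists n => X [].
  + by move=> n; exists n => X [].
  + move=> D hD hDA hDE n.
    have [m1 h1] := hDA n; have [m2 h2] := hDE n.
    exists (maxn m1 m2) => X hX; split.
    * by apply: h1; apply: (gm_mono hD (leq_maxl m1 m2) hX).
    * by apply: h2; apply: (gm_mono hD (leq_maxr m1 m2) hX).
- move=> A E hA hE; split.
  + exact: (join_good HT hA hE).
  + by move=> n; exists n => X h; apply: cl_S; left.
  + by move=> n; exists n => X h; apply: cl_S; right.
  + move=> D hD hAD hED n.
    have [m1 h1] := hAD n; have [m2 h2] := hED n.
    have [D0 De _ _ _] := hD n.
    exists (maxn m1 m2); apply: cl_min => // Z [h|h].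
    * by apply: h1; apply: (gm_mono hA (leq_maxl m1 m2) h).
    * by apply: h2; apply: (gm_mono hE (leq_maxr m1 m2) h).
- move=> A A' E E' hA hA' hE hE' [h1 h2] [h3 h4]; split; split.
  + exact: meet_le.
  + exact: meet_le.
  + exact: join_le.
  + exact: join_le.
Qed.
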